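(* An orthogonal projection need not satisfy the property $\mathcal{AN}^*$: there exist a complex Hilbert space $H$ (e.g. $H = \ell^2$) and an orthogonal projection $P \in \mathcal{L}(H)$ that does not satisfy the property $\mathcal{AN}^*$.
   Context: $\mathcal{L}(H)$ is the space of bounded linear operators on $H$. For a closed subspace $M \neq \{0\}$ of $H$ and $T \in \mathcal{L}(H)$, write $[T|_M] := \inf\{\|Tx\| : x \in M, \|x\|=1\}$; $T|_M$ satisfies the property $\mathcal{N}^*$ if there exists $x_0 \in M$ with $\|x_0\| = 1$ and $\|Tx_0\| = [T|_M]$. $T$ satisfies the property $\mathcal{AN}^*$ if for every closed subspace $M \neq \{0\}$ of $H$, $T|_M$ satisfies $\mathcal{N}^*$. *)

(* Defs.v *)
From Stdlib Require Import Reals.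
From Coquelicot Require Import Coquelicot.
Open Scope R_scope.

Definition seqC := nat -> C.
Definition l2 (x : seqC) : Prop := ex_series (fun n => (Cmod (x n)) ^ 2).
Definition l2norm (x : seqC) : R := sqrt (Series (fun n => (Cmod (x n)) ^ 2)).
Definition l2inner (x y : seqC) : C :=
  (Series (fun n => Re (Cmult (x n) (Cconj (y n)))),
   Series (fun n => Im (Cmult (x n) (Cconj (y n))))).

Definition zeroS : seqC := fun _ => RtoC 0.
Definition addS (x y : seqC) : seqC := fun n => Cplus (x n) (y n).
Definition scalS (a : C) (x : seqC) : seqC := fun n => Cmult a (x n).
Definition subS (x y : seqC) : seqC := fun n => Cminus (x n) (y n).

Definition closed_subspace (M : seqC -> Prop) : Prop :=
  (forall x, M x -> l2 x) /\
  M zeroS /\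
  (forall x y, M x -> M y -> M (addS x y)) /\
  (forall a x, M x -> M (scalS a x)) /\
  (forall (u : nat -> seqC) (x : seqC), (forall k, M (u k)) -> l2 x ->
     is_lim_seq (fun k => l2norm (subS (u k) x)) 0 -> M x).

Definition nontrivial (M : seqC -> Prop) : Prop := exists x, M x /\ x <> zeroS.

(* bounded linear operators on H (values outside H are irrelevant) *)
Definition bounded_op (T : seqC -> seqC) : Prop :=
  (forall x, l2 x -> l2 (T x)) /\
  (forall x y, l2 x -> l2 y -> T (addS x y) = addS (T x) (T y)) /\
  (forall a x, l2 x -> T (scalS a x) = scalS a (T x)) /\
  (exists c, forall x, l2 x -> l2norm (T x) <= c * l2norm x).

Definition orth_proj (P : seqC -> seqC) : Prop :=
  bounded_op P /\
  (forall x, l2 x -> P (P x) = P x) /\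
  (forall x y, l2 x -> l2 y -> l2inner (P x) y = l2inner x (P y)).

Definition red_min (T : seqC -> seqC) (M : seqC -> Prop) : Rbar :=
  Glb_Rbar (fun r => exists x, M x /\ l2norm x = 1 /\ r = l2norm (T x)).

Definition N_star (T : seqC -> seqC) (M : seqC -> Prop) : Prop :=
  exists x0, M x0 /\ l2norm x0 = 1 /\ Finite (l2norm (T x0)) = red_min T M.

Definition AN_star (T : seqC -> seqC) : Prop :=
  forall M, closed_subspace M -> nontrivial M -> N_star T M.

(* Main.v *)
Require Import Defs.
From Stdlib Require Import Reals Lra Lia Psatz Arith.
From Stdlib Require Import FunctionalExtensionality.
From Coquelicot Require Import Coquelicot.
Open Scope R_scope.

Ltac ceq := apply injective_projections; simpl; ring.

Definition single (i : nat) (r : R) : nat -> R :=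
  fun n => if Nat.eq_dec n i then r else 0.

Lemma single_sum i r N : sum_n (single i r) N = if le_lt_dec i N then r else 0.
Proof.
  induction N as [|N IH].
  - rewrite sum_O. unfold single. destruct (Nat.eq_dec 0 i), (le_lt_dec i 0); try lia; auto.
  - rewrite sum_Sn, IH. unfold single. change plus with Rplus.
    destruct (Nat.eq_dec (S N) i), (le_lt_dec i N), (le_lt_dec i (S N)); try lia; lra.
Qed.

Lemma single_series i r : is_series (single i r) r.
Proof.
  unfold is_series. apply (filterlim_ext_loc (fun _ => r)).
  - exists i. intros n Hn. rewrite single_sum. destruct (le_lt_dec i n); [auto|lia].
  - apply filterlim_const.
Qed.

Lemma term_le_Series (a : nat -> R) i :
  (forall n, 0 <= a n) -> ex_series a -> a i <= Series a.
Proof.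
  intros H0 Hex.
  rewrite <- (is_series_unique _ _ (single_series i (a i))).
  apply Series_le; auto. intros n; unfold single.
  destruct (Nat.eq_dec n i); subst; split; try lra; auto.
Qed.

Lemma Cmod_le_l2norm (y : seqC) n : l2 y -> Cmod (y n) <= l2norm y.
Proof.
  intros Hy. unfold l2norm.
  rewrite <- (sqrt_pow2 (Cmod (y n))) by apply Cmod_ge_0.
  apply sqrt_le_1_alt. apply (term_le_Series (fun n => Cmod (y n) ^ 2)); auto.
  intros; apply pow2_ge_0.
Qed.

Lemma l2_sub x y : l2 x -> l2 y -> l2 (subS x y).
Proof.
  intros Hx Hy. unfold l2, subS.
  apply (@ex_series_le R_AbsRing R_CompleteNormedModule _ (fun n => 2 * (Cmod (x n))^2 + 2 * (Cmod (y n))^2)).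
  - intros n. change norm with (@abs R_AbsRing). simpl. rewrite Rabs_pos_eq by apply pow2_ge_0.
    assert (H := Cmod_triangle (x n) (- y n)%C). rewrite Cmod_opp in H.
    assert (0 <= Cmod (x n - y n)%C) by apply Cmod_ge_0.
    assert (0 <= Cmod (x n)) by apply Cmod_ge_0.
    assert (0 <= Cmod (y n)) by apply Cmod_ge_0.
    unfold Cminus in *. change (Cmod (x n + - y n)%C ^ 2 <= 2 * Cmod (x n) ^ 2 + 2 * Cmod (y n) ^ 2). revert H H0 H1 H2. generalize (Cmod (x n + - y n)%C) (Cmod (x n)) (Cmod (y n)). intros a b c Ha Hb Hc Hd. assert (a^2 <= (b+c)^2) by (apply pow_incr; lra). assert (0 <= (b-c)^2) by apply pow2_ge_0. nra.
  - apply (ex_series_plus (fun n => 2 * Cmod (x n) ^2) (fun n => 2 * Cmod (y n) ^2));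
    apply (ex_series_scal (V := R_NormedModule) 2 (fun n => _)); auto.
Qed.

Lemma l2_add x y : l2 x -> l2 y -> l2 (addS x y).
Proof.
  intros Hx Hy. unfold l2, addS.
  apply (@ex_series_le R_AbsRing R_CompleteNormedModule _ (fun n => 2 * (Cmod (x n))^2 + 2 * (Cmod (y n))^2)).
  - intros n. change norm with (@abs R_AbsRing). simpl. rewrite Rabs_pos_eq by apply pow2_ge_0.
    assert (H := Cmod_triangle (x n) (y n)).
    assert (0 <= Cmod (x n + y n)%C) by apply Cmod_ge_0.
    assert (0 <= Cmod (x n)) by apply Cmod_ge_0.
    assert (0 <= Cmod (y n)) by apply Cmod_ge_0.
    revert H H0 H1 H2. generalize (Cmod (x n + y n)%C) (Cmod (x n)) (Cmod (y n)). intros a b c Ha Hb Hc Hd.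
    assert (a^2 <= (b+c)^2) by (apply pow_incr; lra). assert (0 <= (b-c)^2) by apply pow2_ge_0. nra.
  - apply (ex_series_plus (fun n => 2 * Cmod (x n) ^2) (fun n => 2 * Cmod (y n) ^2));
    apply (ex_series_scal (V := R_NormedModule) 2 (fun n => _)); auto.
Qed.

Definition Pe (x : seqC) : seqC := fun n => if Nat.even n then x n else RtoC 0.

Lemma Pe_sq_le x n : 0 <= Cmod (Pe x n) ^ 2 <= Cmod (x n) ^ 2.
Proof.
  split; [apply pow2_ge_0|]. unfold Pe. destruct (Nat.even n); [lra|].
  rewrite Cmod_0. simpl. rewrite Rmult_0_l. apply pow2_ge_0.
Qed.

Lemma Pe_l2 x : l2 x -> l2 (Pe x).
Proof.
  intros Hx. unfold l2.
  apply (@ex_series_le R_AbsRing R_CompleteNormedModule _ (fun n => Cmod (x n)^2)); auto.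
  intros n. change norm with (@abs R_AbsRing). simpl.
  destruct (Pe_sq_le x n). rewrite Rabs_pos_eq; auto.
Qed.

Lemma Pe_orth : orth_proj Pe.
Proof.
  split; [split; [|split; [|split]]|split].
  - apply Pe_l2.
  - intros x y _ _. apply functional_extensionality; intro n. unfold Pe, addS.
    destruct (Nat.even n); [reflexivity|ceq].
  - intros a x _. apply functional_extensionality; intro n. unfold Pe, scalS.
    destruct (Nat.even n); [reflexivity|ceq].
  - exists 1. intros x Hx. rewrite Rmult_1_l. unfold l2norm. apply sqrt_le_1_alt.
    apply Series_le; auto. intros n; apply Pe_sq_le.
  - intros x _. apply functional_extensionality; intro n. unfold Pe.
    destruct (Nat.even n); reflexivity.
  - intros x y _ _. unfold l2inner. f_equal; apply Series_ext; intro n; unfold Pe;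
    destruct (Nat.even n); try reflexivity; simpl; ring.
Qed.

Definition mk (k : nat) : R := INR k + 2.
Definition ak (k : nat) : R := 2 * mk k / (1 + mk k ^ 2).
Definition bk (k : nat) : R := (mk k ^ 2 - 1) / (1 + mk k ^ 2).

Lemma mk_pos k : 2 <= mk k.
Proof. unfold mk. pose proof (pos_INR k). lra. Qed.

Lemma ak_pos k : 0 < ak k.
Proof. unfold ak. pose proof (mk_pos k). apply Rdiv_lt_0_compat; nra. Qed.

Lemma bk_pos k : 0 < bk k.
Proof. unfold bk. pose proof (mk_pos k). apply Rdiv_lt_0_compat; nra. Qed.

Lemma akbk k : ak k ^ 2 + bk k ^ 2 = 1.
Proof. unfold ak, bk. pose proof (mk_pos k). field. nra. Qed.

Definition Mset (x : seqC) : Prop :=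
  l2 x /\ forall k, Cmult (RtoC (ak k)) (x (2*k+1)%nat) = Cmult (RtoC (bk k)) (x (2*k)%nat).

Lemma l2_zero : l2 zeroS.
Proof.
  exists 0. apply (is_series_ext (single 0 0)); [|apply single_series].
  intros n. unfold single, zeroS. rewrite Cmod_0. destruct (Nat.eq_dec n 0); simpl; ring.
Qed.

Lemma l2_scal a x : l2 x -> l2 (scalS a x).
Proof.
  intros Hx. unfold l2, scalS.
  apply (ex_series_ext (fun n => scal (Cmod a ^ 2) (Cmod (x n) ^ 2))).
  - intros n. rewrite Cmod_mult. change scal with Rmult. simpl. ring.
  - apply (ex_series_scal (V := R_NormedModule)). auto.
Qed.

Lemma Cmod_sub_le p q : Cmod (p - q)%C <= Cmod p + Cmod q.
Proof. unfold Cminus. rewrite <- (Cmod_opp q). apply Cmod_triangle. Qed.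

Lemma M_closed : closed_subspace Mset.
Proof.
  split; [|split; [|split; [|split]]].
  - intros x [H _]; exact H.
  - split; [apply l2_zero|]. intros k; unfold zeroS; ceq.
  - intros x y [Hx Ex] [Hy Ey]. split; [apply l2_add; auto|].
    intros k; unfold addS. rewrite !Cmult_plus_distr_l, Ex, Ey. reflexivity.
  - intros a x [Hx Ex]. split; [apply l2_scal; auto|].
    intros k; unfold scalS.
    transitivity (a * (RtoC (ak k) * x (2*k+1)%nat))%C; [ceq|]. rewrite Ex. ceq.
  - intros u x Hu Hx Hlim. split; auto. intros k.
    set (d := (RtoC (ak k) * x (2*k+1)%nat - RtoC (bk k) * x (2*k)%nat)%C).
    assert (E : forall j, d = (RtoC (bk k) * (u j (2*k)%nat - x (2*k)%nat)
                         - RtoC (ak k) * (u j (2*k+1)%nat - x (2*k+1)%nat))%C).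
    { intro j. transitivity ((RtoC (bk k) * (u j (2*k)%nat - x (2*k)%nat)
                         - RtoC (ak k) * (u j (2*k+1)%nat - x (2*k+1)%nat))
           + (RtoC (ak k) * u j (2*k+1)%nat - RtoC (bk k) * u j (2*k)%nat))%C; [unfold d; ceq|].
      rewrite (proj2 (Hu j) k). ceq. }
    assert (B : forall j, Cmod d <= (bk k + ak k) * l2norm (subS (u j) x)).
    { intro j. rewrite (E j).
      assert (Hs : l2 (subS (u j) x)) by (apply l2_sub; auto; apply (proj1 (Hu j))).
      pose proof (Cmod_le_l2norm _ (2*k)%nat Hs) as H1.
      pose proof (Cmod_le_l2norm _ (2*k+1)%nat Hs) as H2.

      eapply Rle_trans; [apply Cmod_sub_le|]. rewrite !Cmod_mult, !Cmod_R.
      rewrite !Rabs_pos_eq by (apply Rlt_le; first [apply ak_pos | apply bk_pos]).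
      pose proof (ak_pos k); pose proof (bk_pos k).
      revert H1 H2. generalize (l2norm (subS (u j) x)). intros L H1 H2.
      apply Rle_trans with (bk k * L + ak k * L); [|lra].
      unfold subS in H1, H2. apply Rplus_le_compat; apply Rmult_le_compat_l; lra. }
    assert (Hle := is_lim_seq_le (fun _ => Cmod d) (fun j => (bk k + ak k) * l2norm (subS (u j) x))
                    (Cmod d) ((bk k + ak k) * 0) B (is_lim_seq_const _)
                    (is_lim_seq_scal_l _ _ _ Hlim)).
    simpl in Hle. rewrite Rmult_0_r in Hle.
    assert (Hd : d = 0%C) by (apply Cmod_eq_0; pose proof (Cmod_ge_0 d); lra).
    transitivity (d + RtoC (bk k) * x (2*k)%nat)%C; [unfold d; ceq|]. rewrite Hd. ceq.
Qed.

Definition fk (k : nat) : seqC := fun n =>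
  if Nat.eq_dec n (2*k) then RtoC (ak k)
  else if Nat.eq_dec n (2*k+1) then RtoC (bk k) else RtoC 0.

Lemma even2k k : Nat.even (2*k) = true.
Proof. rewrite Nat.even_mul. reflexivity. Qed.
Lemma even2k1 k : Nat.even (2*k+1) = false.
Proof. rewrite Nat.even_add, Nat.even_mul. reflexivity. Qed.

Lemma Cmod_R2 r : Cmod (RtoC r) ^ 2 = r ^ 2.
Proof. rewrite Cmod_R, pow2_abs. reflexivity. Qed.

Lemma fk_series k : is_series (fun n => Cmod (fk k n) ^ 2) 1.
Proof.
  rewrite <- (akbk k).
  apply (is_series_ext (fun n => plus (single (2*k) (ak k ^ 2) n) (single (2*k+1) (bk k ^ 2) n))).
  - intros n. unfold single, fk. change plus with Rplus.
    destruct (Nat.eq_dec n (2*k)), (Nat.eq_dec n (2*k+1)); try lia;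
    rewrite Cmod_R2; match goal with |- ?a = ?b => change (@eq R a b) end; ring.
  - apply (is_series_plus (V := R_NormedModule)); apply single_series.
Qed.

Lemma fk_norm k : l2norm (fk k) = 1.
Proof. unfold l2norm. rewrite (is_series_unique _ _ (fk_series k)). apply sqrt_1. Qed.

Lemma fk_M k : Mset (fk k).
Proof.
  split; [exists 1; apply fk_series|].
  intros k'. unfold fk.
  destruct (Nat.eq_dec k' k) as [->|Hne].
  - destruct (Nat.eq_dec (2*k+1) (2*k)); [lia|].
    destruct (Nat.eq_dec (2*k+1) (2*k+1)); [|lia].
    destruct (Nat.eq_dec (2*k) (2*k)); [|lia]. ceq.
  - destruct (Nat.eq_dec (2*k'+1) (2*k)); [lia|].
    destruct (Nat.eq_dec (2*k'+1) (2*k+1)); [lia|].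
    destruct (Nat.eq_dec (2*k') (2*k)); [lia|].
    destruct (Nat.eq_dec (2*k') (2*k+1)); [lia|]. ceq.
Qed.

Lemma Pe_fk_norm k : l2norm (Pe (fk k)) = ak k.
Proof.
  unfold l2norm.
  rewrite (Series_ext _ (single (2*k) (ak k ^ 2))).
  - rewrite (is_series_unique _ _ (single_series _ _)). apply sqrt_pow2.
    apply Rlt_le, ak_pos.
  - intros n. unfold single, Pe, fk.
    destruct (Nat.eq_dec n (2*k)) as [->|].
    + rewrite even2k. destruct (Nat.eq_dec (2*k) (2*k)); [|lia]. apply Cmod_R2.
    + destruct (Nat.eq_dec n (2*k+1)) as [->|].
      * rewrite even2k1. rewrite Cmod_R2. simpl; ring.
      * destruct (Nat.even n); rewrite Cmod_R2; simpl; ring.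
Qed.

Lemma ak_small v : 0 < v -> exists k, ak k < v.
Proof.
  intros Hv. destruct (INR_unbounded (2 / v)) as [k Hk]. exists k.
  pose proof (mk_pos k). assert (Hm : mk k > 2 / v) by (unfold mk; lra).
  assert (Hm2 : mk k * v > 2).
  { apply (Rmult_gt_compat_r v) in Hm; auto. unfold Rdiv in Hm.
    rewrite Rmult_assoc, Rinv_l in Hm by lra. lra. }
  unfold ak. apply (Rmult_lt_reg_r (1 + mk k ^ 2)); [nra|].
  unfold Rdiv. rewrite Rmult_assoc, Rinv_l by nra. nra.
Qed.

Theorem lemma3p2 : exists P : seqC -> seqC, orth_proj P /\ ~ AN_star P.
Proof.
  exists Pe. split; [apply Pe_orth|]. intros H.
  destruct (H Mset M_closed) as [x0 [Mx0 [Hn Heq]]].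
  { exists (fk 0). split; [apply fk_M|]. intros E.
    assert (E2 := f_equal (fun f => fst (f 0%nat)) E). simpl in E2.
    unfold fk in E2. simpl in E2. pose proof (ak_pos 0). unfold zeroS in E2. simpl in E2. lra. }
  destruct Mx0 as [Hl2 Erel].
  assert (Hbound : forall k, l2norm (Pe x0) <= ak k).
  { intros k. destruct (Glb_Rbar_correct (fun r => exists x, Mset x /\ l2norm x = 1 /\ r = l2norm (Pe x)))
      as [Hlb _].
    assert (Hin : Rbar_le (Glb_Rbar (fun r => exists x, Mset x /\ l2norm x = 1 /\ r = l2norm (Pe x))) (ak k)).
    { apply Hlb. exists (fk k). split; [apply fk_M|]. split; [apply fk_norm|].
      symmetry; apply Pe_fk_norm. }
    unfold red_min in Heq. rewrite <- Heq in Hin. exact Hin. }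
  assert (Hz : l2norm (Pe x0) <= 0).
  { apply Rnot_lt_le. intro Hp. destruct (ak_small _ Hp) as [k Hk]. specialize (Hbound k). lra. }
  set (s := Series (fun n => Cmod (Pe x0 n) ^ 2)).
  assert (Hs : s <= 0).
  { apply Rnot_lt_le. intro Hp. pose proof (sqrt_lt_R0 _ Hp). unfold l2norm in Hz. fold s in Hz. lra. }
  assert (Hev : forall n, Nat.even n = true -> x0 n = RtoC 0).
  { intros n Hn0. apply Cmod_eq_0.
    pose proof (term_le_Series (fun n => Cmod (Pe x0 n) ^ 2) n (fun n => pow2_ge_0 _) (Pe_l2 _ Hl2)).
    fold s in H0. unfold Pe in H0. rewrite Hn0 in H0.
    pose proof (Cmod_ge_0 (x0 n)). revert H0 H1. generalize (Cmod (x0 n)). intros c H0 H1. nra. }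
  assert (Hall : forall n, Cmod (x0 n) ^ 2 = 0).
  { intros n. destruct (Nat.Even_or_Odd n) as [[k ->]|[k ->]].
    - rewrite Hev by (apply Nat.even_spec; exists k; reflexivity). rewrite Cmod_0. simpl; ring.
    - assert (Ek := Erel k). rewrite (Hev (2*k)%nat (even2k k)) in Ek.
      assert (Ck := f_equal Cmod Ek). rewrite !Cmod_mult, Cmod_0, Rmult_0_r, Cmod_R in Ck.
      rewrite Rabs_pos_eq in Ck by apply Rlt_le, ak_pos.
      pose proof (ak_pos k). apply Rmult_integral in Ck. destruct Ck as [Ck|Ck]; [lra|].
      rewrite Ck. simpl; ring. }
  unfold l2norm in Hn. rewrite (Series_ext _ (single 0 0)) in Hn.
  - rewrite (is_series_unique _ _ (single_series _ _)), sqrt_0 in Hn. lra.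
  - intros n. rewrite Hall. unfold single. destruct (Nat.eq_dec n 0); reflexivity.
Qed.
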